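(* Let $F$ be a non-abelian free group. For every integer $m\ge 5$ there exist subgroups $H,K\le F$ with $\operatorname{rk}(H)=\operatorname{rk}(K)=m$ and $\operatorname{rk}(H\cap K)\ge m$ but $\operatorname{rk}(H\vee K)>m$. In other words, Guzman's Group-Theoretic Conjecture fails for every $m\ge 5$.
   Context: $H\vee K$ denotes the subgroup generated by $H$ and $K$. Guzman's Group-Theoretic Conjecture for a given $m\ge2$ asserts: if two subgroups $H,K$ of a free group both have rank $m$ and $\operatorname{rk}(H\cap K)\ge m$, then $\operatorname{rk}(H\vee K)\le m$. *)

(* Defs.v *)
(* Free group F(X) on a generating set X, realised as the
   set of freely reduced words over the letters X x {+1,-1}.  Subgroups are
   predicates on words; ranks are minimal sizes of finite generating lists
   (so "rank >= m" / "rank > m" also cover infinite rank). *)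
From mathcomp Require Import all_boot.
Set Implicit Arguments. Unset Strict Implicit. Unset Printing Implicit Defensive.

(* a letter (x, false) stands for x, (x, true) for x^-1 *)
Notation word X := (seq (X * bool)%type).

Definition linv {X : eqType} (a : X * bool) : X * bool := (a.1, ~~ a.2).

Fixpoint reduced {X : eqType} (w : word X) : bool :=
  match w with
  | a :: ((b :: _) as t) => (b != linv a) && reduced t
  | _ => true
  end.

Definition fcons {X : eqType} (a : X * bool) (w : word X) : word X :=
  match w with
  | b :: t => if b == linv a then t else a :: w
  | [::] => [:: a]
  end.

Definition fmul {X : eqType} (u v : word X) : word X := foldr fcons v u.
Definition finv {X : eqType} (w : word X) : word X := rev (map linv w).

Definition subgroup {X : eqType} (H : word X -> Prop) : Prop :=
  [/\ (forall w, H w -> reduced w), H [::],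
      (forall u v, H u -> H v -> H (fmul u v)) &
      (forall u, H u -> H (finv u))].

Definition gen {X : eqType} (S : word X -> Prop) : word X -> Prop :=
  fun w => forall H, subgroup H -> (forall u, S u -> H u) -> H w.

Definition meet {X : eqType} (H K : word X -> Prop) : word X -> Prop :=
  fun w => H w /\ K w.

Definition join {X : eqType} (H K : word X -> Prop) : word X -> Prop :=
  gen (fun w => H w \/ K w).

Definition generated_by {X : eqType} (H : word X -> Prop) (s : seq (word X)) : Prop :=
  all reduced s /\ forall w, H w <-> gen (fun u => u \in s) w.

Definition rank_le {X : eqType} (H : word X -> Prop) (n : nat) : Prop :=
  exists s, size s <= n /\ generated_by H s.

Definition has_rank {X : eqType} (H : word X -> Prop) (m : nat) : Prop :=
  rank_le H m /\ forall n, rank_le H n -> m <= n.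

(* Main.v *)
Require Import Defs.
From mathcomp Require Import all_boot.
From mathcomp Require Import all_algebra zify.
Set Implicit Arguments. Unset Strict Implicit. Unset Printing Implicit Defensive.
Import GRing.Theory.


Section FG.
Context {X : eqType}.
Implicit Types (u v w : word X) (a b : X * bool).

Lemma linvK : involutive (@linv X).
Proof. by case=> c e; rewrite /linv /= negbK. Qed.

Definition R a b := b != linv a.

Lemma reduced_sorted w : reduced w = sorted R w.
Proof.
elim: w => // a [|b t] IH //.
have -> : reduced (a :: b :: t) = (b != linv a) && reduced (b :: t) by [].
by rewrite IH.
Qed.

Lemma reduced_fcons a w : reduced w -> reduced (fcons a w).
Proof.
rewrite !reduced_sorted; case: w => [|b t] //= H.
case: ifP => E.
  by move: H; case: t => //= c t /andP[].
by rewrite /= /R E.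
Qed.

Lemma reduced_fmul u v : reduced v -> reduced (fmul u v).
Proof. by elim: u => //= a u IH Hv; apply: reduced_fcons; apply: IH. Qed.

Lemma reduced_finv u : reduced u -> reduced (Defs.finv u).
Proof.
rewrite !reduced_sorted /Defs.finv rev_sorted sorted_map.
apply: sub_sorted => a b; rewrite /R /= => H.
apply: contra H => /eqP E; by rewrite E linvK.
Qed.

Lemma finvK : involutive (@Defs.finv X).
Proof. by move=> u; rewrite /Defs.finv map_rev revK (mapK linvK). Qed.

Lemma reduced_sub : subgroup (fun w : word X => reduced w).
Proof.
split=> //; first by move=> u v _; apply: reduced_fmul.
by move=> u; apply: reduced_finv.
Qed.

Lemma gen_subgroup (S : word X -> Prop) :
  (forall u, S u -> reduced u) -> subgroup (gen S).
Proof.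
move=> HS; split.
- by move=> w Hw; apply: Hw reduced_sub HS.
- by move=> H [].
- by move=> u v Hu Hv H sH SH; case: (sH) => _ _ Hm _; apply: Hm; [apply: Hu|apply: Hv].
- by move=> u Hu H sH SH; case: (sH) => _ _ _ Hi; apply: Hi; apply: Hu.
Qed.

Lemma gen_in (S : word X -> Prop) u : S u -> gen S u.
Proof. by move=> Su H _; apply. Qed.

Lemma gen_min (S H : word X -> Prop) : subgroup H -> (forall u, S u -> H u) ->
  forall w, gen S w -> H w.
Proof. by move=> sH SH w; apply. Qed.

End FG.


Section Transport.
Context {X : eqType} (x y : X) (hxy : x != y).

Definition iota_l (c : bool) : X := if c then y else x.
Definition mapl (a : bool * bool) : X * bool := (iota_l a.1, a.2).
Definition mapw (w : word bool) : word X := map mapl w.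

Lemma mapl_inj : injective mapl.
Proof.
move=> [c e] [d f]; rewrite /mapl /= => [[E F]]; subst f; congr pair.
by case: c d E => [] [] //= E; move: hxy; rewrite E eqxx.
Qed.

Lemma mapl_linv a : mapl (linv a) = linv (mapl a).
Proof. by []. Qed.

Lemma mapw_fcons a w : mapw (fcons a w) = fcons (mapl a) (mapw w).
Proof.
case: w => [|b t] //=.
rewrite -mapl_linv (inj_eq mapl_inj).
by case: ifP.
Qed.

Lemma mapw_fmul u v : mapw (fmul u v) = fmul (mapw u) (mapw v).
Proof. by elim: u => //= a u IH; rewrite mapw_fcons IH. Qed.

Lemma mapw_finv u : mapw (Defs.finv u) = Defs.finv (mapw u).
Proof. by rewrite /mapw /Defs.finv map_rev -!map_comp. Qed.

Lemma mapw_reduced w : reduced (mapw w) = reduced w.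
Proof.
rewrite !reduced_sorted /mapw sorted_map.
case: w => // a t /=; apply: eq_path => b c /=.
by rewrite /R -mapl_linv (inj_eq mapl_inj).
Qed.
End Transport.


Section Act.
Local Open Scope ring_scope.
Context {X : eqType} (x y : X) {I : Type} {n : nat}
  (g : int -> I -> I) (l : int -> I -> 'rV[rat]_n).
Hypothesis gK : forall p, involutive (g p).

Definition st := ((int * I) * 'rV[rat]_n)%type.

Definition actl (a : X * bool) (s : st) : st :=
  let: ((p, i), v) := s in
  if a.1 == x then (if a.2 then ((p - 1, i), v) else ((p + 1, i), v))
  else if a.1 == y then
    (if a.2 then ((p, g p i), v - l p (g p i)) else ((p, g p i), v + l p i))
  else s.

Lemma actlK a s : actl (linv a) (actl a s) = s.
Proof.
case: a s => c e [[p i] v]; rewrite /actl /linv /=.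
case: ifP => Hx.
  by case: e => /=; rewrite ?subrK ?addrK.
case: ifP => Hy //.
by case: e => /=; rewrite gK ?subrK ?addrK.
Qed.

Definition act (w : word X) (s : st) := foldr actl s w.

Lemma act_fcons a w s : act (fcons a w) s = actl a (act w s).
Proof.
case: w => [|b t] //=.
case: ifP => // /eqP ->.
by have := actlK (linv a) (act t s); rewrite linvK => ->.
Qed.

Lemma act_fmul u v s : act (fmul u v) s = act u (act v s).
Proof. by elim: u => //= a u IH; rewrite act_fcons IH. Qed.

Lemma act_cat u v s : act (u ++ v) s = act u (act v s).
Proof. by rewrite /act foldr_cat. Qed.

Lemma act_finvK u s : act (Defs.finv u) (act u s) = s.
Proof.
elim: u s => //= a u IH s.
by rewrite /Defs.finv /= rev_cons -cats1 act_cat /= actlK IH.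
Qed.

Lemma act_Kfinv u s : act u (act (Defs.finv u) s) = s.
Proof. by rewrite -{1}(finvK u) act_finvK. Qed.

Lemma actl_tr a o v :
  actl a (o, v) = ((actl a (o, 0)).1, v + (actl a (o, 0)).2).
Proof.
case: a o => c e [p i]; rewrite /actl /=.
case: ifP => _; first by case: e; rewrite addr0.
case: ifP => _; last by rewrite addr0.
by case: e; rewrite /= add0r // addrA.
Qed.

Lemma act_tr u o v :
  act u (o, v) = ((act u (o, 0)).1, v + (act u (o, 0)).2).
Proof.
elim: u v => [|a u IH] v /=; first by rewrite addr0.
rewrite IH [in RHS]IH add0r actl_tr [in RHS]actl_tr /=.
by rewrite addrA.
Qed.

Definition dl u o := (act u (o, 0)).1.
Definition tl u o := (act u (o, 0)).2.

Lemma act_dt u o v : act u (o, v) = (dl u o, v + tl u o).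
Proof. by rewrite act_tr. Qed.

Lemma dl_fmul u v o : dl (fmul u v) o = dl u (dl v o).
Proof. by rewrite /dl act_fmul act_dt /= act_dt. Qed.

Lemma tl_fmul u v o : tl (fmul u v) o = tl v o + tl u (dl v o).
Proof. by rewrite /tl act_fmul act_dt /= act_dt. Qed.

Lemma dl_finv u o : dl u (dl (Defs.finv u) o) = o.
Proof.
have := act_Kfinv u (o, 0).
by rewrite [act (Defs.finv u) _]act_dt act_dt /dl => -[].
Qed.

Lemma finv_fix u o : dl u o = o -> dl (Defs.finv u) o = o /\ tl (Defs.finv u) o = - tl u o.
Proof.
move=> Hd.
have := act_finvK u (o, 0).
rewrite [act u _]act_dt Hd add0r act_dt => -[-> E].
by split=> //; apply/eqP; rewrite eq_sym -subr_eq0 -opprD E oppr0.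
Qed.

Definition Stab o0 k (B : 'M[rat]_(k, n)) : word X -> Prop :=
  fun w => reduced w /\ dl w o0 = o0 /\ (tl w o0 <= B)%MS.

Lemma Stab_sub o0 k (B : 'M[rat]_(k, n)) : subgroup (Stab o0 B).
Proof.
split.
- by move=> w [].
- by split=> //; split=> //; rewrite /tl /= sub0mx.
- move=> u v [ru [du tu]] [rv [dv tv]]; split; first exact: reduced_fmul.
  by rewrite dl_fmul tl_fmul dv du; split=> //; apply: addmx_sub.
- move=> u [ru [du tu]]; have [d t] := finv_fix du.
  split; first exact: reduced_finv.
  by rewrite d t; split=> //; rewrite -scaleN1r scalemx_sub.
Qed.

Definition Inv (P : int * I -> bool) : word X -> Prop :=
  fun w => reduced w /\ forall o, P (dl w o) = P o.

Lemma Inv_sub P : subgroup (Inv P).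
Proof.
split.
- by move=> w [].
- by [].
- move=> u v [ru Hu] [rv Hv]; split; first exact: reduced_fmul.
  by move=> o; rewrite dl_fmul Hu Hv.
- move=> u [ru Hu]; split; first exact: reduced_finv.
  by move=> o; rewrite -Hu dl_finv.
Qed.

Definition e (k : nat) : 'rV[rat]_n := \row_(j < n) (if j == k :> nat then 1 else 0).

Lemma LB (L : word X -> Prop) o0 :
  (forall w, L w -> dl w o0 = o0) ->
  (forall j : 'I_n, exists w, L w /\ tl w o0 = e j) ->
  forall k, rank_le L k -> (n <= k)%N.
Proof.
move=> HL Hw k [s [Hs [rs Hgen]]].
pose B := \matrix_(i < size s) tl (nth [::] s i) o0.
have sub : forall w, L w -> Stab o0 B w.
  move=> w /Hgen; apply: gen_min; first exact: Stab_sub.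
  move=> u us; split; first by move/allP: rs; apply.
  split; first by apply: HL; apply/Hgen; apply: gen_in.
  have [i Hi] : exists i : 'I_(size s), nth [::] s i = u.
    have Hi : (index u s < size s)%N by rewrite index_mem.
    by exists (Ordinal Hi); rewrite /= nth_index.
  by apply: (eq_row_sub i); rewrite rowK Hi.
have : (1%:M <= B)%MS.
  apply/row_subP => j; have [w [Lw Tw]] := Hw j.
  have [_ [_ T]] := sub w Lw.
  rewrite (_ : row j (1%:M : 'M[rat]_n) = tl w o0) //.
  rewrite Tw /e; apply/rowP => i; rewrite !mxE.
  have -> : (i == j :> nat) = (j == i) by rewrite eq_sym.
  by case: (j == i); rewrite ?mulr1n ?mulr0n.
move/mxrankS; rewrite mxrank1 => H.
apply: leq_trans H _; apply: leq_trans (rank_leq_row _) Hs.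
Qed.

End Act.


Definition A (i : nat) : word bool :=
  nseq i (false, true) ++ (true, false) :: nseq i (false, false).

Lemma A_reduced i : reduced (A i).
Proof.
rewrite reduced_sorted /A.
have H2 : forall k, path R (true, false) (nseq k (false, false)).
  by elim=> // k IH /=; case: k IH.
have H1 : forall k, path R (false, true) (nseq k (false, true) ++ (true, false) :: nseq i (false, false)).
  by elim=> [|k IH] //=; rewrite H2.
by case: i H1 => [|i] H1 //=; rewrite ?H2.
Qed.

Section Words.
Local Open Scope ring_scope.
Context {X : eqType} (x y : X) (hxy : x != y) {I : Type} {n : nat}
  (g : int -> I -> I) (l : int -> I -> 'rV[rat]_n).
Hypothesis gK : forall p, involutive (g p).

Definition aw (i : nat) : word X := mapw x y (A i).

Lemma a_reduced i : reduced (aw i).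
Proof. by rewrite /aw mapw_reduced // A_reduced. Qed.

Notation act := (act x y g l).

Lemma act_xs k p i v : act (mapw x y (nseq k (false, false))) ((p, i), v) = ((p + k%:Z, i), v).
Proof.
elim: k => [|k IH] /=; first by rewrite addr0.
rewrite IH /actl /= eqxx.
by congr (_, _, _); lia.
Qed.

Lemma act_xis k p i v : act (mapw x y (nseq k (false, true))) ((p, i), v) = ((p - k%:Z, i), v).
Proof.
elim: k => [|k IH] /=; first by rewrite subr0.
rewrite IH /actl /= eqxx.
by congr (_, _, _); lia.
Qed.

Lemma act_a i p j v :
  act (aw i) ((p, j), v) = ((p, g (p + i%:Z) j), v + l (p + i%:Z) j).
Proof.
rewrite /aw /A /mapw map_cat act_cat -/(mapw x y _) /=.
rewrite act_xs /actl /= eq_sym (negbTE hxy) eqxx act_xis.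
by rewrite addrK.
Qed.

Lemma dl_a i p j : dl x y g l (aw i) (p, j) = (p, g (p + i%:Z) j).
Proof. by rewrite /dl act_a. Qed.

Lemma tl_a i p j : tl x y g l (aw i) (p, j) = l (p + i%:Z) j.
Proof. by rewrite /tl act_a add0r. Qed.

Lemma act_ainv i p j v :
  act (Defs.finv (aw i)) ((p, j), v) = ((p, g (p + i%:Z) j), v - l (p + i%:Z) (g (p + i%:Z) j)).
Proof.
rewrite -{1}[v](subrK (l (p + i%:Z) (g (p + i%:Z) j))).
rewrite -{1}[j](gK (p + i%:Z)).
by rewrite -act_a act_finvK.
Qed.

Lemma dl_ainv i p j : dl x y g l (Defs.finv (aw i)) (p, j) = (p, g (p + i%:Z) j).
Proof. by rewrite /dl act_ainv. Qed.

Lemma tl_ainv i p j : tl x y g l (Defs.finv (aw i)) (p, j) = - l (p + i%:Z) (g (p + i%:Z) j).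
Proof. by rewrite /tl act_ainv add0r. Qed.
End Words.


Arguments aw : simpl never.
Arguments fmul : simpl never.
Arguments Defs.finv : simpl never.
Section Constr.
Local Open Scope ring_scope.
Context {X : eqType} (x y : X) (hxy : x != y) (m : nat) (hm : (5 <= m)%N).

Notation a := (aw x y).
Definition bb := fmul (a 1) (a 1).
Definition bab := fmul (a 1) (fmul (a 0) (Defs.finv (a 1))).
Definition aa := fmul (a 0) (a 0).
Definition aba := fmul (a 0) (fmul (a 1) (Defs.finv (a 0))).
Definition ts := map (fun j => a (5 + j)) (iota 1 (m - 5)).
Definition hs := [:: a 0; bb; bab; a 2; a 3] ++ ts.
Definition ks := [:: a 1; aa; aba; a 4; a 5] ++ ts.

Definition gH (q : int) (b : bool) := match q with Posz 1 => ~~ b | _ => b end.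
Definition lH (q : int) (b : bool) : 'rV[rat]_m :=
  match q with
  | Posz k => if k == 0 then (if b then e 2 else e 0)
              else if k == 1 then (if b then 0 else e 1)
              else if k == 2 then e 3 else if k == 3 then e 4
              else if (k <= 5)%N then 0 else e k.-1
  | Negz _ => 0 end.

Lemma gHK p : involutive (gH p).
Proof. by case: p => [[|[|k]]|k] b //=; rewrite negbK. Qed.

Ltac comp gK := rewrite ?(tl_fmul _ _ _ gK, dl_fmul _ _ _ gK, dl_a hxy, tl_a hxy, dl_ainv hxy _ gK, tl_ainv hxy _ gK) ?add0r /= ?oppr0 ?add0r ?addr0.

Ltac redt := repeat (apply: reduced_fmul || apply: reduced_finv || apply: (a_reduced hxy)).

Lemma ts_red : all reduced ts.
Proof. by apply/allP => w /mapP [j _ ->]; apply: a_reduced. Qed.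

Lemma hs_red : all reduced hs.
Proof.
apply/allP => u; rewrite mem_cat => /orP [|]; last by apply: (allP ts_red).
by rewrite !inE => /orP [/eqP->|/orP [/eqP->|/orP [/eqP->|/orP [/eqP->|/eqP->]]]]; rewrite /bb /bab; redt.
Qed.

Lemma ks_red : all reduced ks.
Proof.
apply/allP => u; rewrite mem_cat => /orP [|]; last by apply: (allP ts_red).
by rewrite !inE => /orP [/eqP->|/orP [/eqP->|/orP [/eqP->|/orP [/eqP->|/eqP->]]]]; rewrite /aa /aba; redt.
Qed.

Lemma size_ts : size ts = (m - 5)%N.
Proof. by rewrite size_map size_iota. Qed.

Lemma size_hs : size hs = m.
Proof. by rewrite size_cat size_ts /= subnKC. Qed.

Lemma size_ks : size ks = m.
Proof. by rewrite size_cat size_ts /= subnKC. Qed.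

Lemma nth_ts k : (k < m - 5)%N -> nth [::] ts k = a (5 + (1 + k)).
Proof. by move=> Hk; rewrite (nth_map 0%N) ?size_iota // nth_iota. Qed.

Definition H := gen (fun u => u \in hs).
Definition K := gen (fun u => u \in ks).

Lemma H_sub : subgroup H.
Proof. by apply: gen_subgroup => u; apply: (allP hs_red). Qed.
Lemma K_sub : subgroup K.
Proof. by apply: gen_subgroup => u; apply: (allP ks_red). Qed.

Lemma H_fix : forall w, H w -> dl x y gH lH w (0, false) = (0, false).
Proof.
move=> w Hw.
have : Stab x y gH lH (0, false) (1%:M : 'M[rat]_m) w.
  apply: (gen_min (Stab_sub _ _ _ gHK _ _)) Hw => u us.
  split; first exact: (allP hs_red).
  split; last exact: submx1.
  move: us; rewrite mem_cat => /orP [|]; last by move/mapP => [j _ ->]; comp gHK.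
  by rewrite !inE => /orP [/eqP->|/orP [/eqP->|/orP [/eqP->|/orP [/eqP->|/eqP->]]]]; rewrite /bb /bab; comp gHK.
by case=> _ [].
Qed.

Lemma H_wit (j : 'I_m) : exists w, H w /\ tl x y gH lH w (0, false) = e j.
Proof.
exists (nth [::] hs j); split.
  by apply: gen_in; rewrite mem_nth // size_hs.
case: j => [[|[|[|[|[|k]]]]] Hk] /=; rewrite /bb /bab; comp gHK => //.
rewrite nth_ts; last by rewrite ltn_subRL.
by comp gHK.
Qed.


Definition gK2 (q : int) (b : bool) := match q with Posz 0 => ~~ b | _ => b end.
Definition lK (q : int) (b : bool) : 'rV[rat]_m :=
  match q with
  | Posz k => if k == 0 then (if b then 0 else e 1)
              else if k == 1 then (if b then e 2 else e 0)
              else if (k <= 3)%N then 0 else if k == 4 then e 3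
              else if k == 5 then e 4 else e k.-1
  | Negz _ => 0 end.

Lemma gK2K p : involutive (gK2 p).
Proof. by case: p => [[|k]|k] b //=; rewrite negbK. Qed.

Lemma K_fix : forall w, K w -> dl x y gK2 lK w (0, false) = (0, false).
Proof.
move=> w Hw.
have : Stab x y gK2 lK (0, false) (1%:M : 'M[rat]_m) w.
  apply: (gen_min (Stab_sub _ _ _ gK2K _ _)) Hw => u us.
  split; first exact: (allP ks_red).
  split; last exact: submx1.
  move: us; rewrite mem_cat => /orP [|]; last by move/mapP => [j _ ->]; comp gK2K.
  by rewrite !inE => /orP [/eqP->|/orP [/eqP->|/orP [/eqP->|/orP [/eqP->|/eqP->]]]]; rewrite /aa /aba; comp gK2K.
by case=> _ [].
Qed.

Lemma K_wit (j : 'I_m) : exists w, K w /\ tl x y gK2 lK w (0, false) = e j.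
Proof.
exists (nth [::] ks j); split.
  by apply: gen_in; rewrite mem_nth // size_ks.
case: j => [[|[|[|[|[|k]]]]] Hk] /=; rewrite /aa /aba; comp gK2K => //.
rewrite nth_ts; last by rewrite ltn_subRL.
by comp gK2K.
Qed.


Definition w2 := fmul (a 0) (fmul bb (Defs.finv (a 0))).
Definition w3 := fmul (Defs.finv (a 0)) (fmul (Defs.finv (a 1)) (fmul (a 0) (a 1))).
Definition w4 := fmul (Defs.finv (a 1)) (fmul (a 0) (fmul (a 1) (a 0))).
Definition ms := [:: aa; bb; w2; w3; w4] ++ ts.

Ltac transp := rewrite /w2 /w3 /w4 /aa /bb /aba /bab /aw ; do 4 rewrite -?mapw_finv -?(mapw_fmul hxy); apply: (congr1 (mapw x y)); vm_compute; reflexivity.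

Lemma w2K : w2 = fmul aba aba. Proof. transp. Qed.
Lemma w3H : w3 = fmul (Defs.finv (a 0)) (fmul (Defs.finv bb) (fmul bab bb)). Proof. transp. Qed.
Lemma w3K : w3 = fmul (Defs.finv aa) (fmul (Defs.finv aba) (fmul aa (a 1))). Proof. transp. Qed.
Lemma w4H : w4 = fmul (Defs.finv bb) (fmul bab (fmul bb (a 0))). Proof. transp. Qed.
Lemma w4K : w4 = fmul (Defs.finv (a 1)) (fmul aba aa). Proof. transp. Qed.


Definition gM (q : int) (b : bool * bool) :=
  match q with Posz 0 => (~~ b.1, b.2) | Posz 1 => (b.1, ~~ b.2) | _ => b end.
Definition lM (q : int) (b : bool * bool) : 'rV[rat]_m :=
  match q with
  | Posz 0 => match b with (true, false) => e 0 | (false, true) => e 3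
                         | (true, true) => e 4 | _ => 0 end
  | Posz 1 => match b with (false, true) => e 1 | (true, true) => e 2 | _ => 0 end
  | Posz k => if (k <= 5)%N then 0 else e k.-1
  | Negz _ => 0 end.

Lemma gMK p : involutive (gM p).
Proof. by case: p => [[|[|k]]|k] [b c] //=; rewrite negbK. Qed.

Definition PH (o : int * (bool * bool)) := (o.1 == 0) && ~~ o.2.2.
Definition PK (o : int * (bool * bool)) := (o.1 == 0) && ~~ o.2.1.

Lemma H_inv w : H w -> Inv x y gM lM PH w.
Proof.
apply: (gen_min (Inv_sub _ _ _ gMK _)) => u us.
split; first exact: (allP hs_red).
move=> [p [b c]].
have [->|Hp] := eqVneq p 0; last first.
  move: us; rewrite mem_cat => /orP [|]; last by move/mapP => [j _ ->]; comp gMK; rewrite /PH /= (negbTE Hp).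
  by rewrite !inE => /orP [/eqP->|/orP [/eqP->|/orP [/eqP->|/orP [/eqP->|/eqP->]]]]; rewrite /bb /bab; comp gMK; rewrite /PH /= (negbTE Hp).
move: us; rewrite mem_cat => /orP [|]; last by move/mapP => [j _ ->]; comp gMK.
by rewrite !inE => /orP [/eqP->|/orP [/eqP->|/orP [/eqP->|/orP [/eqP->|/eqP->]]]]; rewrite /bb /bab; comp gMK; rewrite /PH /= ?negbK.
Qed.


Lemma K_inv w : K w -> Inv x y gM lM PK w.
Proof.
apply: (gen_min (Inv_sub _ _ _ gMK _)) => u us.
split; first exact: (allP ks_red).
move=> [p [b c]].
have [->|Hp] := eqVneq p 0; last first.
  move: us; rewrite mem_cat => /orP [|]; last by move/mapP => [j _ ->]; comp gMK; rewrite /PK /= (negbTE Hp).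
  by rewrite !inE => /orP [/eqP->|/orP [/eqP->|/orP [/eqP->|/orP [/eqP->|/eqP->]]]]; rewrite /aa /aba; comp gMK; rewrite /PK /= (negbTE Hp).
move: us; rewrite mem_cat => /orP [|]; last by move/mapP => [j _ ->]; comp gMK.
by rewrite !inE => /orP [/eqP->|/orP [/eqP->|/orP [/eqP->|/orP [/eqP->|/eqP->]]]]; rewrite /aa /aba; comp gMK; rewrite /PK /= ?negbK.
Qed.

Lemma meet_fix w : meet H K w -> dl x y gM lM w (0, (false, false)) = (0, (false, false)).
Proof.
move=> [/H_inv [_ h] /K_inv [_ k]].
move: (h (0, (false, false))) (k (0, (false, false))).
rewrite /PH /PK /=; case: (dl _ _ _ _ _ _) => p [b c] /=.
by case: (eqVneq p 0) => [->|] //=; case: b; case: c.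
Qed.

Lemma inH u : u \in hs -> H u. Proof. by move=> Hu; apply: gen_in. Qed.
Lemma inK u : u \in ks -> K u. Proof. by move=> Hu; apply: gen_in. Qed.

Lemma ms_meet u : u \in ms -> meet H K u.
Proof.
have [_ _ Hm Hi] := H_sub.
have [_ _ Km Ki] := K_sub.
rewrite mem_cat => /orP [|Ht]; last first.
  by split; [apply: inH|apply: inK]; rewrite mem_cat Ht orbT.
rewrite !inE => /orP [/eqP->|/orP [/eqP->|/orP [/eqP->|/orP [/eqP->|/eqP->]]]].
- by split; [apply: (Hm); apply: inH|apply: inK]; rewrite !inE eqxx ?orbT.
- by split; [apply: inH|apply: (Km); apply: inK]; rewrite !inE eqxx ?orbT.
- split; first by rewrite /w2; apply: (Hm); [|apply: (Hm); [|apply: (Hi)]]; apply: inH; rewrite !inE eqxx ?orbT.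
  by rewrite w2K; apply: (Km); apply: inK; rewrite !inE eqxx ?orbT.
- split; first by rewrite w3H; apply: (Hm); [apply: (Hi)|apply: (Hm); [apply: (Hi)|apply: (Hm)]]; apply: inH; rewrite !inE eqxx ?orbT.
  by rewrite w3K; apply: (Km); [apply: (Ki)|apply: (Km); [apply: (Ki)|apply: (Km)]]; apply: inK; rewrite !inE eqxx ?orbT.
- split; first by rewrite w4H; apply: (Hm); [apply: (Hi)|apply: (Hm); [|apply: (Hm)]]; apply: inH; rewrite !inE eqxx ?orbT.
  by rewrite w4K; apply: (Km); [apply: (Ki)|apply: (Km)]; apply: inK; rewrite !inE eqxx ?orbT.
Qed.

Lemma size_ms : size ms = m.
Proof. by rewrite size_cat size_ts /= subnKC. Qed.

Lemma meet_wit (j : 'I_m) : exists w, meet H K w /\ tl x y gM lM w (0, (false, false)) = e j.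
Proof.
exists (nth [::] ms j); split.
  by apply: ms_meet; rewrite mem_nth // size_ms.
case: j => [[|[|[|[|[|k]]]]] Hk] /=; rewrite /aa /bb /w2 /w3 /w4; comp gMK => //.
  by rewrite addrC addNKr.
rewrite nth_ts; last by rewrite ltn_subRL.
by comp gMK.
Qed.


Definition gJ (q : int) (u : unit) := u.
Definition lJ (q : int) (u : unit) : 'rV[rat]_m.+1 :=
  match q with Posz k => e k | Negz _ => 0 end.
Lemma gJK p : involutive (gJ p). Proof. by []. Qed.

Lemma join_fix w : join H K w -> dl x y gJ lJ w (0, tt) = (0, tt).
Proof.
move=> Hw.
have S := Stab_sub x y lJ gJK (0, tt) (1%:M : 'M[rat]_m.+1).
suff : Stab x y gJ lJ (0, tt) (1%:M : 'M[rat]_m.+1) w by case=> _ [].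
apply: (gen_min S) Hw => u [Hu|Hu].
  apply: (gen_min S) Hu => v vs; split; first exact: (allP hs_red).
  split; last exact: submx1.
  move: vs; rewrite mem_cat => /orP [|]; last by move/mapP => [j _ ->]; comp gJK.
  by rewrite !inE => /orP [/eqP->|/orP [/eqP->|/orP [/eqP->|/orP [/eqP->|/eqP->]]]]; rewrite /bb /bab; comp gJK.
apply: (gen_min S) Hu => v vs; split; first exact: (allP ks_red).
split; last exact: submx1.
move: vs; rewrite mem_cat => /orP [|]; last by move/mapP => [j _ ->]; comp gJK.
by rewrite !inE => /orP [/eqP->|/orP [/eqP->|/orP [/eqP->|/orP [/eqP->|/eqP->]]]]; rewrite /aa /aba; comp gJK.
Qed.

Lemma join_wit (j : 'I_m.+1) : exists w, join H K w /\ tl x y gJ lJ w (0, tt) = e j.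
Proof.
exists (a j); split; last by comp gJK.
apply: gen_in.
case: j => [[|[|[|[|[|[|k]]]]]] Hk] /=.
- by left; apply: inH; rewrite !inE eqxx.
- by right; apply: inK; rewrite !inE eqxx.
- by left; apply: inH; rewrite !inE eqxx ?orbT.
- by left; apply: inH; rewrite !inE eqxx ?orbT.
- by right; apply: inK; rewrite !inE eqxx ?orbT.
- by right; apply: inK; rewrite !inE eqxx ?orbT.
left; apply: inH; rewrite mem_cat; apply/orP; right.
apply/mapP; exists k.+1 => //.
rewrite mem_iota; apply/andP; split => //.
by rewrite add1n ltnS ltn_subRL.
Qed.

End Constr.

Theorem corollary1p2 (X : eqType) (x y : X) (hxy : x != y) (m : nat) (hm : 5 <= m) :
  exists H K : word X -> Prop,
    subgroup H /\ subgroup K /\ has_rank H m /\ has_rank K m /\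
    (forall n, rank_le (meet H K) n -> m <= n) /\
    ~ rank_le (join H K) m.
Proof.
exists (H x y m), (K x y m).
split; first exact: H_sub hxy m.
split; first exact: K_sub hxy m.
split.
  split; first by exists (hs x y m); rewrite size_hs //; split=> //; split => //; exact: hs_red.
  exact (LB gHK (@H_fix _ x y hxy m) (H_wit hxy hm)).
split.
  split; first by exists (ks x y m); rewrite size_ks //; split=> //; split => //; exact: ks_red.
  exact (LB gK2K (@K_fix _ x y hxy m) (K_wit hxy hm)).
split; first exact (LB gMK (@meet_fix _ x y hxy m) (meet_wit hxy hm)).
move=> Hr.
have := LB gJK (@join_fix _ x y hxy m) (@join_wit _ x y hxy m) Hr.
by rewrite ltnn.
Qed.
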